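(* There is a comeager set of $\alpha\in 2^{(2^{<\mathbb N})^{<\mathbb N}\times\mathbb N\times\mathbb N}$ such that for all $x,y\in(2^{\mathbb N})^{\mathbb N}$ with $x$ separated and $y$ injective and separated, the following hold (with $\gamma=\gamma_\alpha$): (i) for every finite partial function $\tau\colon N\to\{0,1\}$ there are infinitely many $(t,k)\in N$ such that the function $(s,d)\mapsto\gamma(y)(t,k)(s,d)$ extends $\tau$; (ii) for all finite partial functions $\tau_1,\tau_2\colon N\to\{0,1\}$ there are infinitely many $(s,d)\in N$ such that $(t,k)\mapsto\gamma(y)(t,k)(s,d)$ extends $\tau_1$ and $(t,k)\mapsto\gamma(x)(s,d)(t,k)$ extends $\tau_2$.
   Context: $\mathbb N=\{0,1,2,\dots\}$; $N=\mathbb N^{<\mathbb N}\times\mathbb N$, where $\mathbb N^{<\mathbb N}$ is the set of finite sequences of naturals. The space $2^{(2^{<\mathbb N})^{<\mathbb N}\times\mathbb N\times\mathbb N}$ has the product topology (the index set is countable and discrete). For $z\in 2^{\mathbb N}$ and $t=(t_1,\dots,t_l)\in\mathbb N^{<\mathbb N}$, $z\circ t=(z(t_1),\dots,z(t_l))\in 2^{<\mathbb N}$. Given $\alpha$, define $\gamma_\alpha\colon(2^{\mathbb N})^{\mathbb N}\to(2^N)^N$ by: for $x\in(2^{\mathbb N})^{\mathbb N}$, $s=(s_1,\dots,s_m)$, $t\in\mathbb N^{<\mathbb N}$, $d,k\in\mathbb N$: $\gamma_\alpha(x)(s,d)(t,k)=\alpha\big((x(s_1)\circ t,\dots,x(s_m)\circ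 t),k,d\big)$. A sequence $a\in(2^{\mathbb N})^{\mathbb N}$ is injective if $a(i)\ne a(j)$ for $i\ne j$, and separated if for all distinct $n,k\in\mathbb N$ there is $i$ with $a(i)(n)\ne a(i)(k)$. *)

(* Defs.v *)
From mathcomp Require Import all_boot all_order.
From mathcomp Require Import all_classical all_reals topology.
Set Implicit Arguments. Unset Strict Implicit. Unset Printing Implicit Defensive.
Local Open Scope classical_set_scope.

Definition Nidx := (seq nat * nat)%type.

(* The index set (2^{<N})^{<N} x N x N, and the space of alpha's:
   functions from it to bool, with the product topology of discrete bool
   (the canonical topology of function spaces in MathComp-Analysis). *)
Definition Aidx := (seq (seq bool) * nat * nat)%type.
Definition Aspace : topologicalType := {ptws Aidx -> bool}.

Definition comeager (T : topologicalType) (A : set T) : Prop :=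
  exists F : nat -> set T,
    (forall n, open (F n) /\ dense (F n)) /\ \bigcap_n F n `<=` A.

Definition compose_seq (z : nat -> bool) (t : seq nat) : seq bool := map z t.

Definition gamma (alpha : Aspace) (x : nat -> nat -> bool) :
    Nidx -> Nidx -> bool :=
  fun sd tk =>
    alpha ((map (fun si => compose_seq (x si) tk.1) sd.1, tk.2), sd.2).

Definition injective_seq (a : nat -> nat -> bool) : Prop :=
  forall i j, i <> j -> a i <> a j.

Definition separated_seq (a : nat -> nat -> bool) : Prop :=
  forall n k, n <> k -> exists i, a i n <> a i k.

Definition finite_partial (tau : Nidx -> option bool) : Prop :=
  finite_set [set p | tau p <> None].

Definition extends (f : Nidx -> bool) (tau : Nidx -> option bool) : Prop :=
  forall p b, tau p = Some b -> f p = b.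

(* Main.v *)
Require Import Defs.
From mathcomp Require Import all_boot all_order.
From mathcomp Require Import all_classical all_reals topology.
Set Implicit Arguments. Unset Strict Implicit.
Local Open Scope classical_set_scope.

Definition Key := (seq (seq bool) * nat)%type.

Fixpoint lk (l : seq (Key * bool)) (k : Key) : bool :=
  match l with
  | [::] => false
  | (k', b) :: l' => if k' == k then b else lk l' k
  end.

Definition Cfg := (seq (Key * bool) * seq (Key * bool) * nat)%type.

Definition G (c : Cfg) : set Aspace :=
  let: (l1, l2, m) := c in
  [set a : Aspace | exists d, (m <= d)%N /\
     (forall key, key \in map fst l1 -> a (key.1, d, key.2) = lk l1 key) /\
     (forall key, key \in map fst l2 -> a (key.1, key.2, d) = lk l2 key)].

Lemma sumn_ge (s : seq nat) x : x \in s -> (x <= sumn s)%N.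
Proof.
elim: s => // y s IH; rewrite inE => /orP[/eqP->|/IH]; first exact: leq_addr.
by move=> h; apply: (leq_trans h); exact: leq_addl.
Qed.

Lemma G_dense c : dense (G c).
Proof.
case: c => [[l1 l2] m] O [a0 Oa0] oO.
pose K := (sumn (map (fun p : Key * bool => p.1.2) l1) +
           sumn (map (fun p : Key * bool => p.1.2) l2))%N.
pose d j := (m + j + K).+1.
pose aj j : Aspace := fun i : Aidx =>
  let: (u, x, y) := i in
  if (x == d j) && ((u, y) \in map fst l1) then lk l1 (u, y)
  else if (y == d j) && ((u, x) \in map fst l2) then lk l2 (u, x)
  else a0 i.
have cv : (aj @ \oo) --> (a0 : Aspace).
  apply: (proj2 (@pointwise_cvgP (discrete_topology Aidx) bool (aj @ \oo) a0 _)) => -[[u x] y].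
  apply: cvg_near_cst; rewrite !near_map; near=> j.
  have hj : (x + y < j)%N by near: j; exact: nbhs_infty_gt.
  rewrite /aj.
  have -> : (x == d j) = false.
    by apply/negbTE; rewrite neq_ltn /d; apply/orP; left; rewrite ltnS; apply: leq_trans (leq_addr _ _); apply: leq_trans (leq_addl _ _); apply: leq_trans (ltnW hj); exact: leq_addr.
  have -> : (y == d j) = false.
    by apply/negbTE; rewrite neq_ltn /d; apply/orP; left; rewrite ltnS; apply: leq_trans (leq_addr _ _); apply: leq_trans (leq_addl _ _); apply: leq_trans (ltnW hj); exact: leq_addl.
  by [].
have : \forall j \near \oo, O (aj j).
  by apply: cv; apply: open_nbhs_nbhs; split.
move=> [N _ HN]; have Oj : O (aj N) by apply: HN => /=.
exists (aj N); split => //; set j := N.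
exists (d j); split.
  by rewrite /d; apply: leqW; rewrite -addnA leq_addr.
split.
  by move=> [u k] kin /=; rewrite eqxx kin.
move=> [u k] kin /=.
have kle : (k <= K)%N.
  apply: leq_trans (leq_addl _ _); apply: sumn_ge.
  move: kin => /mapP [[[u0 k0] b] kin2 /= [_ ->]].
  by apply/mapP; exists ((u0, k0), b).
have -> : (k == d j) = false.
  by apply/negbTE; rewrite neq_ltn /d ltnS; apply/orP; left; apply: leq_trans kle _; exact: leq_addl.
by rewrite eqxx kin.
Unshelve. all: by end_near.
Qed.

Lemma open_constr (K : eqType) (f : K -> Aidx) (g : K -> bool) (s : seq K) :
  open [set a : Aspace | forall k, k \in s -> a (f k) = g k].
Proof.
elim: s => [|k0 s IH].
  have -> : [set a : Aspace | forall k, k \in [::] -> a (f k) = g k] = setT.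
    by apply/seteqP; split=> // a _ k.
  exact: openT.
have -> : [set a : Aspace | forall k, k \in k0 :: s -> a (f k) = g k] =
  ((fun a : Aspace => a (f k0)) @^-1` [set g k0]) `&`
  [set a : Aspace | forall k, k \in s -> a (f k) = g k].
  apply/seteqP; split=> a /=.
    by move=> H; split; [apply: H; rewrite inE eqxx|move=> k ks; apply: H; rewrite inE ks orbT].
  by move=> [H1 H2] k; rewrite inE => /orP[/eqP->//|/H2].
apply: openI => //.
apply: open_comp; last exact: discrete_open.
move=> a _; exact: (@proj_continuous _ (fun _ : Aidx => bool) (f k0)).
Qed.

Lemma G_open c : open (G c).
Proof.
case: c => [[l1 l2] m].
have -> : G (l1, l2, m) = \bigcup_(d in [set d | (m <= d)%N])
   ([set a : Aspace | forall key, key \in map fst l1 -> a (key.1, d, key.2) = lk l1 key] `&`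
    [set a : Aspace | forall key, key \in map fst l2 -> a (key.1, key.2, d) = lk l2 key]).
  apply/seteqP; split => a /=.
    by move=> [d [hd [h1 h2]]]; exists d.
  by move=> [d hd [h1 h2]]; exists d.
apply: bigcup_open => d _; apply: openI; exact: open_constr.
Qed.

Lemma witnesses (A B : eqType) (P : B -> A -> A -> Prop) (E : seq A) :
  (forall a b, a != b -> exists i, P i a b) ->
  exists W : seq B, forall a b, a \in E -> b \in E -> a != b ->
    exists2 i, i \in W & P i a b.
Proof.
move=> HP.
suff [W HW] : exists W : seq B, forall pr, pr \in [seq (a, b) | a <- E, b <- E] ->
    pr.1 != pr.2 -> exists2 i, i \in W & P i pr.1 pr.2.
  exists W => a b aE bE ab.
  exact: (HW (a, b) (allpairs_f pair aE bE) ab).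
elim: [seq (a, b) | a <- E, b <- E] => [|pr L [W HW]].
  by exists [::].
case: (eqVneq pr.1 pr.2) => h.
  exists W => q; rewrite inE => /orP[/eqP->|/HW //]; by rewrite h eqxx.
have [i Hi] := HP _ _ h.
exists (i :: W) => q; rewrite inE => /orP[/eqP-> _|qL qn].
  by exists i; rewrite ?inE ?eqxx.
by have [j jW Pj] := HW q qL qn; exists j; rewrite // inE jW orbT.
Qed.

Lemma key_inj1 (F : nat -> nat -> bool) (t s s' : seq nat) i0 :
  i0 \in t ->
  (forall a b, a \in s -> b \in s' -> a != b -> exists2 i, i \in t & F i a != F i b) ->
  map (fun i => map (F i) s) t = map (fun i => map (F i) s') t -> s = s'.
Proof.
move=> i0t H /eq_in_map E.
have hs : size s = size s'.
  by have := E i0 i0t; move=> /= /(congr1 size); rewrite !size_map.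
apply: (eq_from_nth (x0 := 0)) => // j js.
have js' : (j < size s')%N by rewrite -hs.
case: (eqVneq (nth 0 s j) (nth 0 s' j)) => // ne.
have [i it Fi] := H _ _ (mem_nth 0 js) (mem_nth 0 js') ne.
have := E i it => /= /(congr1 (fun l => nth false l j)).
rewrite (nth_map 0) // (nth_map 0) -?hs // => e.
by move: Fi; rewrite e eqxx.
Qed.

Lemma key_inj2 (F : nat -> nat -> bool) (s t1 t2 : seq nat) :
  (forall a b, a \in t1 -> b \in t2 -> a != b -> exists2 i, i \in s & F a i != F b i) ->
  map (fun a => map (F a) s) t1 = map (fun a => map (F a) s) t2 -> t1 = t2.
Proof.
move=> H E.
have hs : size t1 = size t2 by have := congr1 size E; rewrite !size_map.
apply: (eq_from_nth (x0 := 0)) => // j js.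
have js' : (j < size t2)%N by rewrite -hs.
case: (eqVneq (nth 0 t1 j) (nth 0 t2 j)) => // ne.
have [i it Fi] := H _ _ (mem_nth 0 js) (mem_nth 0 js') ne.
have := congr1 (fun l => nth [::] l j) E.
rewrite (nth_map 0) // (nth_map 0) -?hs // => /eq_in_map e.
by move: Fi; rewrite e // eqxx.
Qed.

Lemma lk_map (T : eqType) (key : T -> Key) (v : T -> bool) (D : seq T) p :
  {in D &, injective key} -> p \in D ->
  lk [seq (key q, v q) | q <- D] (key p) = v p.
Proof.
elim: D => // q D IH inj; rewrite inE => /orP[/eqP->|pD] /=.
  by rewrite eqxx.
case: (eqVneq (key q) (key p)) => e.
  by rewrite (inj q p) ?inE ?eqxx ?pD ?orbT.
apply: IH => // a b aD bD; apply: inj; by rewrite inE ?aD ?bD orbT.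
Qed.

Lemma unbounded_infinite (T : eqType) (A : set T) (f : T -> nat) :
  (forall n, exists p, A p /\ (n <= f p)%N) -> infinite_set A.
Proof.
move=> H /finite_seqP [s As].
have [p [Ap le]] := H (sumn (map f s)).+1.
rewrite As /= in Ap.
have := @sumn_ge _ _ (map_f f Ap).
by rewrite leqNgt le.
Qed.

Lemma dom_list (tau : Nidx -> option bool) : finite_partial tau ->
  exists D : seq Nidx, forall p b, tau p = Some b -> p \in D.
Proof.
move=> /finite_seqP [D HD]; exists D => p b e.
have : [set p | tau p <> None] p by rewrite /= e.
by rewrite HD.
Qed.

Lemma ex_neq_y (y : nat -> nat -> bool) : injective_seq y ->
  forall a b : nat, a != b -> exists i, y a i != y b i.
Proof.
move=> Hy a b ab.
case: (pselect (exists i, y a i != y b i)) => // nex; exfalso.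
apply: (Hy a b); first exact/eqP.
apply: funext => i; apply/eqP; apply/negPn/negP => h; apply: nex; by exists i.
Qed.

Lemma ex_neq_sep (y : nat -> nat -> bool) : separated_seq y ->
  forall a b : nat, a != b -> exists i, y i a != y i b.
Proof.
move=> Hy a b /eqP ab; have [i hi] := Hy a b ab; exists i; exact/eqP.
Qed.

Lemma in_flat (D : seq Nidx) p a : p \in D -> a \in p.1 -> a \in flatten (map fst D).
Proof. by move=> pD ap; apply/flatten_mapP; exists p. Qed.

Theorem lemma4p3 :
  comeager [set alpha : Aspace |
    forall x y : nat -> nat -> bool,
      separated_seq x -> injective_seq y -> separated_seq y ->
      (forall tau : Nidx -> option bool, finite_partial tau ->
         infinite_set [set tk : Nidx |
           extends (fun sd => gamma alpha y tk sd) tau])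
      /\
      (forall tau1 tau2 : Nidx -> option bool,
         finite_partial tau1 -> finite_partial tau2 ->
         infinite_set [set sd : Nidx |
           extends (fun tk => gamma alpha y tk sd) tau1 /\
           extends (fun tk => gamma alpha x sd tk) tau2])].
Proof.
exists (fun n => match @unpickle Cfg n with Some c => G c | None => setT end).
split.
  move=> n; case: (unpickle n) => [c|]; first by split; [exact: G_open|exact: G_dense].
  split; first exact: openT.
  by move=> O [o Oo] _; exists o.
move=> a Ha.
have HG : forall c, G c a.
  by move=> c; have := Ha (pickle c) I; rewrite pickleK.
move=> x y sx iy sy; split.
- move=> tau ftau.
  have [D HD] := dom_list ftau.
  have [W HW] := @witnesses nat nat (fun i a b => y i a != y i b)
    (flatten (map fst D)) (ex_neq_sep sy).
  pose t := 0 :: W.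
  pose keyf (p : Nidx) : Key := (map (fun si => map (y si) p.1) t, p.2).
  pose v (p : Nidx) := odflt false (tau p).
  have inj : {in D &, injective keyf}.
    move=> [s1 k1] [s2 k2] p1 p2 e.
    have e1 : map (fun si => map (y si) s1) t = map (fun si => map (y si) s2) t := congr1 fst e.
    have e2 : k1 = k2 := congr1 snd e.
    rewrite e2; congr (_, _).
    apply: (key_inj1 (i0 := 0) _ _ e1); first by rewrite inE eqxx.
    move=> a0 b0 a0s b0s ne.
    have [i iW Pi] := HW a0 b0 (in_flat p1 a0s) (in_flat p2 b0s) ne.
    by exists i; rewrite // inE iW orbT.
  apply: (@unbounded_infinite _ _ snd) => n.
  have := HG ([::], [seq (keyf p, v p) | p <- D], n).
  move=> [d [nd [_ H2]]].
  exists (t, d); split => //= p b e.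
  have pD := HD _ _ e.
  have := H2 (keyf p).
  rewrite -map_comp (map_f keyf pD) lk_map // /v e => /(_ isT).
  by rewrite /gamma /compose_seq.
- move=> tau1 tau2 f1 f2.
  have [D1 HD1] := dom_list f1.
  have [D2 HD2] := dom_list f2.
  have [W1 HW1] := @witnesses nat nat (fun i a b => y a i != y b i)
    (flatten (map fst D1)) (ex_neq_y iy).
  have [W2 HW2] := @witnesses nat nat (fun i a b => x i a != x i b)
    (flatten (map fst D2)) (ex_neq_sep sx).
  pose s := 0 :: W1 ++ W2.
  pose key1 (p : Nidx) : Key := (map (fun a => map (y a) s) p.1, p.2).
  pose key2 (p : Nidx) : Key := (map (fun si => map (x si) p.1) s, p.2).
  pose v1 (p : Nidx) := odflt false (tau1 p).
  pose v2 (p : Nidx) := odflt false (tau2 p).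
  have inj1 : {in D1 &, injective key1}.
    move=> [s1 k1] [s2 k2] p1 p2 e.
    have e1 : map (fun a => map (y a) s) s1 = map (fun a => map (y a) s) s2 := congr1 fst e.
    have e2 : k1 = k2 := congr1 snd e.
    rewrite e2; congr (_, _).
    apply: (key_inj2 _ e1).
    move=> a0 b0 a0s b0s ne.
    have [i iW Pi] := HW1 a0 b0 (in_flat p1 a0s) (in_flat p2 b0s) ne.
    by exists i; rewrite // inE mem_cat iW orbT.
  have inj2 : {in D2 &, injective key2}.
    move=> [s1 k1] [s2 k2] p1 p2 e.
    have e1 : map (fun si => map (x si) s1) s = map (fun si => map (x si) s2) s := congr1 fst e.
    have e2 : k1 = k2 := congr1 snd e.
    rewrite e2; congr (_, _).
    apply: (key_inj1 (i0 := 0) _ _ e1); first by rewrite inE eqxx.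
    move=> a0 b0 a0s b0s ne.
    have [i iW Pi] := HW2 a0 b0 (in_flat p1 a0s) (in_flat p2 b0s) ne.
    by exists i; rewrite // inE mem_cat iW !orbT.
  apply: (@unbounded_infinite _ _ snd) => n.
  have := HG ([seq (key1 p, v1 p) | p <- D1], [seq (key2 p, v2 p) | p <- D2], n).
  move=> [d [nd [H1 H2]]].
  exists (s, d); split => //=; split => p b e.
    have pD := HD1 _ _ e.
    have := H1 (key1 p).
    rewrite -map_comp (map_f key1 pD) lk_map // /v1 e => /(_ isT).
    by rewrite /gamma /compose_seq.
  have pD := HD2 _ _ e.
  have := H2 (key2 p).
  rewrite -map_comp (map_f key2 pD) lk_map // /v2 e => /(_ isT).
  by rewrite /gamma /compose_seq.
Qed.
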